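(* Let $M$ be a matroid such that the basis pair graph of each minor of $M$ is connected. Let $k\geq 2$ and let $S$ be a multiset of size $k\,r(M)$ whose elements lie in $E(M)$. If $G_M(S)$ is connected, then $G'_M(S)$ is connected.
   Context: For a matroid $N$, the basis pair graph $G(N)$ has as vertices the ordered triples $(A_1,A_2,A_3)$ of subsets of $E(N)$ with $A_1,A_2$ disjoint bases of $N$ and $A_3=E(N)-(A_1\cup A_2)$; two vertices $(A_1,A_2,A_3)$, $(B_1,B_2,B_3)$ are adjacent if $|A_1-B_1|+|A_2-B_2|+|A_3-B_3|=2$. The graph $G_M(S)$ has as vertices all multisets of $k$ bases of $M$ whose multiset union is $S$, two vertices being adjacent if one is obtained from the other by a symmetric exchange between two of its bases: replacing bases $B_i,B_j$ by $(B_i-b_i)\cup\{b_j\}$ and $(B_j-b_j)\cup\{b_i\}$ for some $b_i\in B_i-B_j$, $b_j\in B_j-B_i$. The graph $G'_M(S)$ is defined the same way but with ordered $k$-tuples $(B_1,\dots,B_k)$ of bases of $M$ (with multiset union $S$) as vertices: $(A_1,\dots,A_k)$ and $(B_1,\dots,B_k)$ are adjacent if for some $1\le i<j\le k$ and some $b_i\in B_i-B_j$, $b_j\in B_j-B_i$, the tuple $(A_1,\dots,A_k)$ is obtained from $(B_1,\dots,B_k)$ by replacing $B_i$ by $(B_i-b_i)\cup\{b_j\}$ and $B_j$ by $(B_j-b_j)\cup\{b_i\}$ (other coordinates unchanged). Empty graphs are regarded as connected. *)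

(* Defs.v *)
From mathcomp Require Import all_boot.
Set Implicit Arguments. Unset Strict Implicit. Unset Printing Implicit Defensive.

Section Matroids.
Variable T : finType.

Definition is_matroid (E : {set T}) (B : {set {set T}}) : Prop :=
  [/\ B != set0,
      (forall B1, B1 \in B -> B1 \subset E) &
      (forall B1 B2, B1 \in B -> B2 \in B -> forall x, x \in B1 :\: B2 ->
         exists2 y, y \in B2 :\: B1 & y |: (B1 :\ x) \in B)].

Definition indep (B : {set {set T}}) (I : {set T}) : bool :=
  [exists B0 in B, I \subset B0].

Definition rk (B : {set {set T}}) (X : {set T}) : nat :=
  \max_(I : {set T} | indep B I && (I \subset X)) #|I|.

Definition delete_bases (E : {set T}) (B : {set {set T}}) (D : {set T}) :=
  [set I : {set T} | (I \subset E :\: D) && indep B I && (#|I| == rk B (E :\: D))].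

Definition contract_bases (E : {set T}) (B : {set {set T}}) (C : {set T}) :=
  [set J : {set T} | (J \subset E :\: C) &&
     [exists BC : {set T}, [&& BC \subset C, indep B BC, #|BC| == rk B C
                             & J :|: BC \in B]]].

(* connectivity of an (undirected) graph with vertex predicate V and adjacency adj;
   the empty graph is connected *)
Definition gconnected (X : eqType) (V : pred X) (adj : rel X) : Prop :=
  forall x y, V x -> V y ->
    exists p : seq X, [/\ path (fun a b => adj a b || adj b a) x p,
                          last x p = y & all V p].

Definition bp_vertex (E : {set T}) (B : {set {set T}})
  (t : {set T} * {set T} * {set T}) : bool :=
  let: (A1, A2, A3) := t in
  [&& A1 \in B, A2 \in B, [disjoint A1 & A2] & A3 == E :\: (A1 :|: A2)].

Definition bp_adj (t u : {set T} * {set T} * {set T}) : bool :=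
  let: (A1, A2, A3) := t in let: (B1, B2, B3) := u in
  #|A1 :\: B1| + #|A2 :\: B2| + #|A3 :\: B3| == 2.

Definition bp_connected (E : {set T}) (B : {set {set T}}) : Prop :=
  gconnected (bp_vertex E B) bp_adj.

Definition minors_bp_connected (E : {set T}) (B : {set {set T}}) : Prop :=
  forall C D : {set T}, C \subset E -> D \subset E -> [disjoint C & D] ->
    bp_connected (E :\: D :\: C) (contract_bases (E :\: D) (delete_bases E B D) C).

(* multisets on T are multiplicity functions T -> nat;
   multisets of bases are multiplicity functions {set T} -> nat *)

Definition GM_vertex (B : {set {set T}}) (k : nat) (S : T -> nat)
  (m : {ffun {set T} -> nat}) : bool :=
  [&& \sum_(B0 : {set T}) m B0 == k,
      [forall B0 : {set T}, (0 < m B0) ==> (B0 \in B)] &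
      [forall x : T, \sum_(B0 : {set T}) m B0 * (x \in B0) == S x]].

Definition GM_step (m m' : {ffun {set T} -> nat}) : bool :=
  [exists Bi : {set T}, exists Bj : {set T}, exists bi : T, exists bj : T,
    [&& Bi != Bj, 0 < m Bi, 0 < m Bj, bi \in Bi :\: Bj, bj \in Bj :\: Bi &
        m' == [ffun B0 => m B0 - (B0 == Bi) - (B0 == Bj)
                         + (B0 == bj |: (Bi :\ bi)) + (B0 == bi |: (Bj :\ bj))]]].

Definition GM_connected (B : {set {set T}}) (k : nat) (S : T -> nat) : Prop :=
  gconnected (GM_vertex B k S) GM_step.

Definition GM'_vertex (B : {set {set T}}) (k : nat) (S : T -> nat)
  (A : {ffun 'I_k -> {set T}}) : bool :=
  [forall i, A i \in B] &&
  [forall x : T, \sum_(i < k) (x \in A i) == S x].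

Definition GM'_step (k : nat) (Bt A : {ffun 'I_k -> {set T}}) : bool :=
  [exists i : 'I_k, exists j : 'I_k, exists bi : T, exists bj : T,
    [&& (i < j)%N, bi \in Bt i :\: Bt j, bj \in Bt j :\: Bt i &
        A == [ffun l => if l == i then bj |: (Bt i :\ bi)
                        else if l == j then bi |: (Bt j :\ bj) else Bt l]]].

Definition GM'_connected (B : {set {set T}}) (k : nat) (S : T -> nat) : Prop :=
  gconnected (@GM'_vertex B k S) (@GM'_step k).

End Matroids.

(* Main.v *)
Require Import Defs.
From mathcomp Require Import all_boot zify.
Set Implicit Arguments. Unset Strict Implicit. Unset Printing Implicit Defensive.

Section Mat.
Variable T : finType.
Variables (E : {set T}) (B : {set {set T}}).
Hypothesis HM : is_matroid E B.

Lemma bases_card B1 B2 : B1 \in B -> B2 \in B -> #|B1| = #|B2|.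
Proof.
case: HM => _ _ Hex h1 h2.
move: {2}#|B1 :\: B2| (erefl #|B1 :\: B2|) => n.
elim: n B1 h1 => [|n IH] B1 h1 hn.
- have e0 : B1 :\: B2 = set0 by apply/eqP; rewrite -cards_eq0 hn.
  have sub12 : B1 \subset B2 by rewrite -setD_eq0 e0.
  have sub21 : B2 \subset B1.
    apply/subsetP => y yB2; apply/negPn/negP => yB1.
    have hy : y \in B2 :\: B1 by rewrite inE yB2 andbT.
    have [z] := Hex _ _ h2 h1 y hy.
    by rewrite e0 inE.
  by have -> : B1 = B2 by apply/eqP; rewrite eqEsubset sub12 sub21.
- have [x hx] : exists x, x \in B1 :\: B2 by apply/set0Pn; rewrite -card_gt0 hn.
  have [y hy hB] := Hex _ _ h1 h2 x hx.
  move: hx hy; rewrite !inE => /andP[xB2 xB1] /andP[yB1 yB2].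
  rewrite -(IH _ hB).
  + rewrite cardsU1 !inE (negbTE yB1) andbF /= (cardsD1 x B1) xB1; lia.
  + have -> : (y |: B1 :\ x) :\: B2 = (B1 :\: B2) :\ x.
      apply/setP => z; rewrite !inE.
      case: (eqVneq z y) => [->|]; first by rewrite yB2 /= andbF.
      by move=> nzy /=; case: (z \in B2); case: (z != x).
    move: hn; rewrite (cardsD1 x (B1 :\: B2)) !inE xB1 xB2 /=; lia.
Qed.

Lemma indep_card (J B1 : {set T}) : indep B J -> B1 \in B -> #|J| <= #|B1|.
Proof.
move=> /existsP[B0 /andP[h0 hJ]] h1.
by rewrite -(bases_card h0 h1) subset_leq_card.
Qed.

Lemma rk_basis (Z X : {set T}) : X \in B -> X \subset Z -> rk B Z = #|X|.
Proof.
move=> hX hXZ; apply/eqP; rewrite eqn_leq; apply/andP; split.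
- by apply/bigmax_leqP => J /andP[hJ _]; exact: indep_card.
- apply: (@leq_bigmax_cond _ (fun J => indep B J && (J \subset Z)) (fun J => #|J|) X).
  by rewrite hXZ andbT; apply/existsP; exists X; rewrite hX subxx.
Qed.

Lemma del_mem (D X J : {set T}) : X \in B -> X \subset E :\: D ->
  (J \in delete_bases E B D) = (J \subset E :\: D) && (J \in B).
Proof.
move=> hX hXD; rewrite inE (rk_basis hX hXD).
case hJD : (J \subset E :\: D) => //=.
case hJ : (J \in B).
- by rewrite (bases_card hJ hX) eqxx andbT; apply/existsP; exists J; rewrite hJ subxx.
- apply/negbTE/negP => /andP[/existsP[B0 /andP[h0 hJB0]] /eqP hc].
  have : J == B0.
    by rewrite eqEcard hJB0 hc (bases_card h0 hX) leqnn.
  by move/eqP => e; rewrite e h0 in hJ.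
Qed.

End Mat.

Section Gen.
Variable T : finType.

Lemma rk_card_sub (B' : {set {set T}}) (I X : {set T}) : X \in B' -> I \subset X -> rk B' I = #|I|.
Proof.
move=> hX hIX; apply/eqP; rewrite eqn_leq; apply/andP; split.
- by apply/bigmax_leqP => J /andP[_ hJ]; exact: subset_leq_card.
- apply: (@leq_bigmax_cond _ (fun J => indep B' J && (J \subset I)) (fun J => #|J|) I).
  by rewrite subxx andbT; apply/existsP; exists X; rewrite hX hIX.
Qed.

Lemma ctr_mem (B' : {set {set T}}) (Z I X J : {set T}) : X \in B' -> I \subset X ->
  J \in contract_bases Z B' I -> (J \subset Z :\: I) /\ J :|: I \in B'.
Proof.
move=> hX hIX; rewrite inE => /andP[hJ /existsP[BC /and4P[hBC _ hc hU]]].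
rewrite (rk_card_sub hX hIX) in hc.
have e : BC == I by rewrite eqEcard hBC (eqP hc) leqnn.
by move/eqP: e => e; rewrite e in hU; split.
Qed.

Lemma ctr_mem2 (B' : {set {set T}}) (Z I X J : {set T}) : X \in B' -> I \subset X ->
  J \subset Z :\: I -> J :|: I \in B' -> J \in contract_bases Z B' I.
Proof.
move=> hX hIX hJ hU; rewrite inE hJ /=; apply/existsP; exists I.
rewrite subxx hU (rk_card_sub hX hIX) eqxx /= andbT.
by apply/existsP; exists X; rewrite hX hIX.
Qed.

End Gen.

Section Tup.
Variable T : finType.
Variables (B : {set {set T}}) (k : nat) (S : T -> nat).

Definition tup := {ffun 'I_k -> {set T}}.

Definition upd2 (A : tup) (i j : 'I_k) (U V : {set T}) : tup :=
  [ffun l => if l == i then U else if l == j then V else A l].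

Definition cnt (A : tup) : {ffun {set T} -> nat} :=
  [ffun B0 => \sum_(l < k) (A l == B0)].

Definition reach (x y : tup) : Prop :=
  exists p : seq tup, [/\ path (fun a b => GM'_step a b || GM'_step b a) x p,
                          last x p = y & all (GM'_vertex B S) p].

Lemma reach_refl x : reach x x.
Proof. by exists [::]. Qed.

Lemma reach_trans x y z : reach x y -> reach y z -> reach x z.
Proof.
move=> [p [h1 h2 h3]] [q [g1 g2 g3]]; exists (p ++ q); split.
- by rewrite cat_path h1 h2 g1.
- by rewrite last_cat h2.
- by rewrite all_cat h3 g3.
Qed.

Lemma reach_edge x y : GM'_vertex B S y -> GM'_step x y || GM'_step y x -> reach x y.
Proof. by move=> hy he; exists [:: y]; rewrite /= he hy. Qed.

Lemma step_sym (A : tup) i j bi bj : i != j -> bi \in A i :\: A j -> bj \in A j :\: A i ->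
  GM'_step A (upd2 A i j (bj |: (A i :\ bi)) (bi |: (A j :\ bj))).
Proof.
move=> nij hbi hbj.
case: (ltngtP i j) => [lt|gt|e].
- apply/existsP; exists i; apply/existsP; exists j; apply/existsP; exists bi;
  apply/existsP; exists bj; by rewrite lt hbi hbj eqxx.
- apply/existsP; exists j; apply/existsP; exists i; apply/existsP; exists bj;
  apply/existsP; exists bi; rewrite gt hbi hbj /=; apply/eqP/ffunP => l; rewrite !ffunE.
  by case: (eqVneq l i) => [->|]; rewrite ?(negbTE nij) // eq_sym (negbTE nij).
- by move: nij; rewrite (val_inj e) eqxx.
Qed.

Lemma upd2_upd2 (A : tup) i j U V U' V' : upd2 (upd2 A i j U V) i j U' V' = upd2 A i j U' V'.
Proof. by apply/ffunP => l; rewrite !ffunE; case: (eqVneq l i) => //; case: (eqVneq l j). Qed.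

Lemma upd2_id (A : tup) i j : upd2 A i j (A i) (A j) = A.
Proof. by apply/ffunP => l; rewrite !ffunE; case: (eqVneq l i) => [->|] //; case: (eqVneq l j) => [->|]. Qed.

Lemma upd2_i (A : tup) i j U V : upd2 A i j U V i = U.
Proof. by rewrite ffunE eqxx. Qed.

Lemma upd2_j (A : tup) i j U V : i != j -> upd2 A i j U V j = V.
Proof. by move=> nij; rewrite ffunE eq_sym (negbTE nij) eqxx. Qed.

Lemma sum2 (F G : 'I_k -> nat) i j : i != j -> (forall l, l != i -> l != j -> F l = G l) ->
  \sum_l F l + G i + G j = \sum_l G l + F i + F j.
Proof.
move=> nij hFG.
have split (H : 'I_k -> nat) : \sum_l H l = H i + H j + \sum_(l | (l != i) && (l != j)) H l.
  by rewrite (bigD1 i) //= (bigD1 j) /= ?addnA //; rewrite eq_sym.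
rewrite (split F) (split G) (eq_bigr G); first by set s := \sum_(l | _) G l; lia.
by move=> l /andP[h1 h2]; apply: hFG.
Qed.

Lemma cnt_upd (A : tup) i j U V B0 : i != j ->
  cnt (upd2 A i j U V) B0 + (A i == B0) + (A j == B0) = cnt A B0 + (U == B0) + (V == B0).
Proof.
move=> nij; rewrite !ffunE.
have := @sum2 (fun l => upd2 A i j U V l == B0) (fun l => A l == B0) i j nij.
rewrite /= upd2_i upd2_j //; apply => l h1 h2.
by rewrite ffunE (negbTE h1) (negbTE h2).
Qed.

Lemma sum_eq_one (X : {set T}) (F : {set T} -> nat) :
  \sum_(B0 : {set T}) (X == B0) * F B0 = F X.
Proof.
rewrite (bigD1 X) //= eqxx mul1n big1 ?addn0 // => B0 hB0.
by rewrite eq_sym (negbTE hB0).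
Qed.

Lemma cnt_sum_x (A : tup) x :
  \sum_(B0 : {set T}) cnt A B0 * (x \in B0) = \sum_(l < k) (x \in A l).
Proof.
under eq_bigr => B0 _ do rewrite ffunE big_distrl /=.
rewrite exchange_big /=; apply: eq_bigr => l _.
exact: (@sum_eq_one (A l) (fun B0 => nat_of_bool (x \in B0))).
Qed.

Lemma cnt_pos (A : tup) B0 : 0 < cnt A B0 -> exists l, A l = B0.
Proof.
rewrite ffunE; case: (pickP (fun l => A l == B0)) => [l /eqP e|none]; first by exists l.
by rewrite big1 // => l _; rewrite none.
Qed.

Lemma cnt_ge1 (A : tup) l : 0 < cnt A (A l).
Proof. by rewrite ffunE (bigD1 l) //= eqxx. Qed.

Lemma cnt_vertex (A : tup) : GM'_vertex B S A -> GM_vertex B k S (cnt A).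
Proof.
move=> /andP[/forallP hB /forallP hS]; apply/and3P; split.
- under eq_bigr => B0 _ do rewrite ffunE.
  rewrite exchange_big /= (eq_bigr (fun _ => 1)) ?sum1_card ?card_ord // => l _.
  by rewrite -(@sum_eq_one (A l) (fun _ => 1)); apply: eq_bigr => ? _; rewrite muln1.
- apply/forallP => B0; apply/implyP => /cnt_pos [l <-]; exact: hB.
- by apply/forallP => x; rewrite cnt_sum_x.
Qed.

Lemma vertex_cnt (A : tup) : GM_vertex B k S (cnt A) -> GM'_vertex B S A.
Proof.
move=> /and3P[_ /forallP hB /forallP hS]; apply/andP; split.
- apply/forallP => l; move: (hB (A l)); rewrite cnt_ge1; exact.
- by apply/forallP => x; rewrite -cnt_sum_x.
Qed.


Lemma two_le (m : {ffun {set T} -> nat}) X Y B0 : X != Y -> 0 < m X -> 0 < m Y ->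
  (B0 == X) + (B0 == Y) <= m B0.
Proof.
move=> nXY hX hY.
case: (eqVneq B0 X) => [->|nX].
- rewrite ?eqxx (negbTE nXY) /=; lia.
- case: (eqVneq B0 Y) => [->|nY] /=; lia.
Qed.

Lemma lift_fwd (A : tup) m' : GM'_vertex B S A -> GM_vertex B k S m' -> GM_step (cnt A) m' ->
  exists A', reach A A' /\ cnt A' = m'.
Proof.
move=> hA hm' /existsP[Bi /existsP[Bj /existsP[bi /existsP[bj]]]].
move=> /and5P[nB hi hj hbi /andP[hbj /eqP em]].
have [i ei] := cnt_pos hi; have [j ej] := cnt_pos hj.
have nij : i != j by apply/eqP => e; move: nB; rewrite -ei -ej e eqxx.
have hc : cnt (upd2 A i j (bj |: (Bi :\ bi)) (bi |: (Bj :\ bj))) = m'.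
  apply/ffunP => B0.
  have := cnt_upd A (bj |: (Bi :\ bi)) (bi |: (Bj :\ bj)) B0 nij.
  set c := cnt _ B0; move=> H; rewrite em ffunE.
  move: H; rewrite ei ej ![_ == B0]eq_sym.
  have := two_le B0 nB hi hj; rewrite /c; lia.
exists (upd2 A i j (bj |: (Bi :\ bi)) (bi |: (Bj :\ bj))); split => //.
apply: reach_edge; first by apply: vertex_cnt; rewrite hc.
by have := @step_sym A i j bi bj nij; rewrite ei ej => /(_ hbi hbj) ->.
Qed.

Lemma lift_bwd (A : tup) m' : GM'_vertex B S A -> GM_vertex B k S m' -> GM_step m' (cnt A) ->
  exists A', reach A A' /\ cnt A' = m'.
Proof.
move=> hA hm' /existsP[Bi /existsP[Bj /existsP[bi /existsP[bj]]]].
move=> /and5P[nB hi hj hbi /andP[hbj /eqP em]].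
have hU : 0 < cnt A (bj |: (Bi :\ bi)) by rewrite em ffunE eqxx /=; lia.
have hV : 0 < cnt A (bi |: (Bj :\ bj)) by rewrite em ffunE eqxx /=; lia.
have [i ei] := cnt_pos hU; have [j ej] := cnt_pos hV.
have nij : i != j.
  apply/eqP => e; move: ej; rewrite -e ei => /setP /(_ bj).
  move: hbi hbj; rewrite !inE eqxx /= => /andP[h1 h2] /andP[h3 h4].
  rewrite orbF => /esym/eqP ebj; by rewrite -ebj h4 in h1.
have hc : cnt (upd2 A i j Bi Bj) = m'.
  apply/ffunP => B0.
  have := cnt_upd A Bi Bj B0 nij.
  set c := cnt (upd2 _ _ _ _ _) B0.
  rewrite ei ej em ffunE ![_ == B0]eq_sym.
  have := two_le B0 nB hi hj; rewrite /c.
  move: (m' B0) (B0 == Bi) (B0 == Bj) (B0 == _ |: _) (B0 == bi |: _) => M [] [] [] []; lia.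
exists (upd2 A i j Bi Bj); split => //.
apply: reach_edge; first by apply: vertex_cnt; rewrite hc.
apply/orP; right.
have := @step_sym (upd2 A i j Bi Bj) i j bi bj nij.
rewrite upd2_i upd2_j // upd2_upd2 -ei -ej upd2_id; exact.
Qed.

Lemma perm_reach (hswap : forall (A : tup) i j, GM'_vertex B S A -> i != j ->
                    reach A (upd2 A i j (A j) (A i)))
  (A' : tup) n : forall A : tup, #|[set l | A l != A' l]| <= n -> GM'_vertex B S A ->
  cnt A = cnt A' -> reach A A'.
Proof.
elim: n => [|n IH] A hn hA hc;
  (case: (pickP (fun l => A l != A' l)) => [i hi|none];
   last by (have -> : A = A' by (apply/ffunP => l; move: (none l) => /negbFE/eqP));
   apply: reach_refl).
- have : 0 < #|[set l | A l != A' l]| by apply/card_gt0P; exists i; rewrite inE.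
  lia.
- case: (pickP (fun j => (A j == A' i) && (A' j != A' i))) => [j /andP[hj1 hj2] | none2].
  + have nij : i != j by apply/eqP => e; move: hi; rewrite {1}e (eqP hj1) eqxx.
    set A2 := upd2 A i j (A j) (A i).
    have hc2 : cnt A2 = cnt A.
      apply/ffunP => B0; have := cnt_upd A (A j) (A i) B0 nij.
      by rewrite [in RHS]addnAC => /addIn /addIn.
    have hA2 : GM'_vertex B S A2 by apply: vertex_cnt; rewrite hc2; exact: cnt_vertex.
    apply: (reach_trans (hswap A i j hA nij)).
    apply: IH => //; last by rewrite hc2.
    have : [set l | A2 l != A' l] \proper [set l | A l != A' l].
      apply/properP; split.
      * apply/subsetP => l; rewrite !inE /A2 ffunE.
        case: (eqVneq l i) => [->|nli]; first by rewrite (eqP hj1) eqxx.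
        case: (eqVneq l j) => [->|] //= _.
        by rewrite (eqP hj1) eq_sym.
      * by exists i; rewrite !inE // /A2 ffunE eqxx (eqP hj1) eqxx.
    move/proper_card => hp; rewrite -ltnS; exact: leq_trans hp hn.
  + exfalso.
    have := congr1 (fun m : {ffun {set T} -> nat} => (m (A' i) : nat)) hc; rewrite /= !ffunE.
    rewrite (bigD1 i) //= [X in _ = X](bigD1 i) //= eqxx (negbTE hi) /=.
    move=> H; suff : \sum_(l | l != i) (A l == A' i) <= \sum_(l | l != i) (A' l == A' i).
      by move: H; rewrite add0n add1n => ->; rewrite ltnn.
    apply: leq_sum => l _; move: (none2 l).
    by case: (A l == A' i); case: (A' l == A' i).
Qed.

End Tup.

Section Brute.
Variable T : finType.

Lemma disjP' (A1 A2 : {set T}) x : [disjoint A1 & A2] -> (x \in A1) && (x \in A2) = false.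
Proof. by rewrite -setI_eq0 => /eqP /setP /(_ x); rewrite !inE. Qed.

Lemma pt_count (X Y A1 A2 : {set T}) x : A1 :|: A2 = (X :|: Y) :\: (X :&: Y) ->
  [disjoint A1 & A2] ->
  (x \in A1 :|: X :&: Y) + (x \in A2 :|: X :&: Y) = (x \in X) + (x \in Y).
Proof.
move=> /setP /(_ x) e /(disjP' x) d; rewrite !inE in e d *.
move: e d; case: (x \in A1); case: (x \in A2); case: (x \in X); case: (x \in Y) => //.
Qed.

Lemma adj_sets (X Y A1 A2 B1 B2 : {set T}) a b :
  A1 :|: A2 = (X :|: Y) :\: (X :&: Y) -> [disjoint A1 & A2] ->
  B1 :|: B2 = (X :|: Y) :\: (X :&: Y) -> [disjoint B1 & B2] ->
  A1 :\: B1 = [set a] -> A2 :\: B2 = [set b] ->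
  [/\ a \in (A1 :|: X :&: Y) :\: (A2 :|: X :&: Y), b \in (A2 :|: X :&: Y) :\: (A1 :|: X :&: Y),
      b |: ((A1 :|: X :&: Y) :\ a) = B1 :|: X :&: Y &
      a |: ((A2 :|: X :&: Y) :\ b) = B2 :|: X :&: Y].
Proof.
move=> eA dA eB dB ea eb.
have F x : [&& ((x \in A1) || (x \in A2)) == ~~ ((x \in X) && (x \in Y)) && ((x \in X) || (x \in Y)),
    ~~ ((x \in A1) && (x \in A2)),
    ((x \in B1) || (x \in B2)) == ~~ ((x \in X) && (x \in Y)) && ((x \in X) || (x \in Y)),
    ~~ ((x \in B1) && (x \in B2)),
    ((x \in A1) && (x \notin B1)) == (x == a) &
    ((x \in A2) && (x \notin B2)) == (x == b)].
  move/setP: eA => /(_ x); rewrite !inE => ->.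
  move/setP: eB => /(_ x); rewrite !inE => ->.
  move/setP: ea => /(_ x); rewrite !inE andbC => ->.
  move/setP: eb => /(_ x); rewrite !inE andbC => ->.
  by rewrite (disjP' x dA) (disjP' x dB) !eqxx.
split.
- move: (F a); rewrite !inE eqxx.
  case: (a \in A1); case: (a \in A2); case: (a \in X); case: (a \in Y);
  case: (a \in B1); case: (a \in B2); case: (a == b) => //.
- move: (F b); rewrite !inE eqxx.
  case: (b \in A1); case: (b \in A2); case: (b \in X); case: (b \in Y);
  case: (b \in B1); case: (b \in B2); case: (b == a) => //.
- apply/setP => x; move: (F x); rewrite !inE.
  case: (x \in A1); case: (x \in A2); case: (x \in X); case: (x \in Y);
  case: (x \in B1); case: (x \in B2); case: (x == a); case: (x == b) => //.
- apply/setP => x; move: (F x); rewrite !inE.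
  case: (x \in A1); case: (x \in A2); case: (x \in X); case: (x \in Y);
  case: (x \in B1); case: (x \in B2); case: (x == a); case: (x == b) => //.
Qed.

Lemma compl_eq (Z A1 A2 : {set T}) : A1 :|: A2 = Z -> [disjoint A1 & A2] -> A2 = Z :\: A1.
Proof.
move=> e d; apply/setP => x; rewrite -e !inE.
by move: (disjP' x d); case: (x \in A1); case: (x \in A2).
Qed.

Lemma adj_cards (Z A1 A2 B1 B2 : {set T}) :
  A1 :|: A2 = Z -> [disjoint A1 & A2] -> B1 :|: B2 = Z -> [disjoint B1 & B2] ->
  #|A1| = #|B1| -> #|A2| = #|B2| -> #|A1 :\: B1| + #|A2 :\: B2| = 2 ->
  #|A1 :\: B1| = 1 /\ #|A2 :\: B2| = 1.
Proof.
move=> eA dA eB dB c1 c2 h.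
have n1 : #|A1 :\: B1| != 0.
  apply/negP => /eqP h0.
  have e1 : A1 = B1.
    apply/eqP; rewrite eqEcard c1 leqnn andbT -setD_eq0.
    by rewrite -cards_eq0 h0.
  move: h; rewrite h0 (compl_eq eA dA) (compl_eq eB dB) e1 setDv cards0.
  by [].
have n2 : #|A2 :\: B2| != 0.
  apply/negP => /eqP h0.
  have e1 : A2 = B2.
    apply/eqP; rewrite eqEcard c2 leqnn andbT -setD_eq0.
    by rewrite -cards_eq0 h0.
  rewrite setUC in eA; rewrite setUC in eB; rewrite disjoint_sym in dA; rewrite disjoint_sym in dB.
  move: h; rewrite h0 (compl_eq eA dA) (compl_eq eB dB) e1 setDv cards0.
  by [].
lia.
Qed.

Lemma setDUK' (X I : {set T}) : I \subset X -> (X :\: I) :|: I = X.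
Proof.
move/subsetP => h; apply/setP => x; rewrite !inE.
by case hI: (x \in I); [rewrite (h _ hI) orbT | rewrite orbF].
Qed.

Lemma sub_DI0 (J Z I : {set T}) : J \subset Z :\: I -> J :&: I = set0.
Proof.
move/subsetP => h; apply/setP => x; rewrite !inE.
by case hJ: (x \in J) => //=; move: (h _ hJ); rewrite !inE; case: (x \in I).
Qed.

End Brute.

Lemma arith1 z' i z x y a1 a2 u : z' + i = z -> z + i = x + y -> y = x -> a1 + i = x ->
  a2 + i = x -> u + 0 = a1 + a2 -> z' <= u.
Proof. lia. Qed.

Section Main.
Variable T : finType.
Variables (E : {set T}) (B : {set {set T}}) (k : nat) (S : T -> nat).
Hypothesis HM : is_matroid E B.
Hypothesis Hmin : minors_bp_connected E B.

Lemma swap_reach (A : {ffun 'I_k -> {set T}}) i j : GM'_vertex B S A -> i != j ->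
  reach B S A (upd2 A i j (A j) (A i)).
Proof.
move=> hA nij.
have hB : forall l, A l \in B by case/andP: (hA) => /forallP.
have hBE : forall X, X \in B -> X \subset E by case: HM.
case: (eqVneq (A i) (A j)) => [e|nXY].
  have -> : upd2 A i j (A j) (A i) = A.
    apply/ffunP => l; rewrite !ffunE.
    case: (eqVneq l i) => [->|_] //; case: (eqVneq l j) => [->|_] //.
  exact: reach_refl.
have hX : A i \in B := hB i.
have hY : A j \in B := hB j.
set X := A i in hX nXY *. set Y := A j in hY nXY *.
pose I := X :&: Y. pose Z := X :|: Y. pose D := E :\: Z.
have hZE : Z \subset E by rewrite subUset hBE // hBE.
have hED : E :\: D = Z by rewrite /D setDDr setDv set0U; apply/setIidPr.
have hIZ : I \subset Z by apply: subset_trans (subsetIl _ _) (subsetUl _ _).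
have hIE : I \subset E by apply: subset_trans hIZ hZE.
have hDE : D \subset E := subsetDl _ _.
have hdisj : [disjoint I & D].
  rewrite -setI_eq0; apply/eqP/setP => x; rewrite !inE.
  by case: (x \in X); case: (x \in Y); rewrite //= andbF.
have := Hmin hIE hDE hdisj; rewrite hED => hbp.
have hXD : X \subset E :\: D by rewrite hED subsetUl.
have hXdel : X \in delete_bases E B D by rewrite (del_mem HM _ hX hXD) hXD hX.
have hIX : I \subset X := subsetIl _ _.
set B' := contract_bases Z (delete_bases E B D) I in hbp.
have memB' (J : {set T}) : J \in B' -> (J \subset Z :\: I) /\ J :|: I \in B.
  move=> /(ctr_mem hXdel hIX) [h1 h2]; split => //.
  by move: h2; rewrite (del_mem HM _ hX hXD) => /andP[].
have memB'2 (J : {set T}) : J \subset Z :\: I -> J :|: I \in B -> J \in B'.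
  move=> h1 h2; apply: (ctr_mem2 hXdel hIX h1).
  rewrite (del_mem HM _ hX hXD) h2 hED andbT subUset hIZ andbT.
  exact: subset_trans h1 (subsetDl _ _).
have hcardY : #|Y| = #|X| := bases_card HM hY hX.
have hZI : #|Z :\: I| + #|I| = #|Z|.
  have e : Z :&: I = I by apply/setIidPr.
  by rewrite -(cardsID I Z) e addnC.
have hZc : #|Z| + #|I| = #|X| + #|Y| := cardsUI X Y.
have vfacts A1 A2 A3 : bp_vertex (Z :\: I) B' (A1, A2, A3) ->
  [/\ A1 :|: I \in B, A2 :|: I \in B, A1 :|: A2 = Z :\: I, [disjoint A1 & A2] &
      (A3 = set0 /\ #|A1| + #|I| = #|X| /\ #|A2| + #|I| = #|X|)].
  move=> /and4P[h1 h2 hd /eqP h3].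
  have [s1 b1] := memB' _ h1; have [s2 b2] := memB' _ h2.
  have c1 : #|A1| + #|I| = #|X|.
    by rewrite -(bases_card HM b1 hX) -cardsUI (sub_DI0 s1) cards0 addn0.
  have c2 : #|A2| + #|I| = #|X|.
    by rewrite -(bases_card HM b2 hX) -cardsUI (sub_DI0 s2) cards0 addn0.
  have eU : A1 :|: A2 = Z :\: I.
    apply/eqP; rewrite eqEcard subUset s1 s2 /=.
    have := cardsUI A1 A2; move: hd; rewrite -setI_eq0 => /eqP ->; rewrite cards0.
    exact: arith1 hZI hZc hcardY c1 c2.
  by split => //; rewrite h3 eU setDv.
pose f (t : {set T} * {set T} * {set T}) := upd2 A i j (t.1.1 :|: I) (t.1.2 :|: I).
have hvalid t : bp_vertex (Z :\: I) B' t -> GM'_vertex B S (f t).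
  case: t => [[A1 A2] A3] /vfacts [b1 b2 eU dU _].
  apply/andP; split.
  - apply/forallP => l; rewrite /f ffunE /=.
    by case: ifP => _ //; case: ifP => _ //.
  - apply/forallP => x; case/andP: (hA) => _ /forallP /(_ x) /eqP <-.
    have := @sum2 k (fun l => x \in f (A1, A2, A3) l) (fun l => x \in A l) i j nij.
    rewrite /f upd2_i upd2_j //= -!addnA (pt_count x eU dU) => h.
    apply/eqP/(@addIn ((x \in X) + (x \in Y))); apply: h => l hi hj.
    by rewrite ffunE (negbTE hi) (negbTE hj).
have hadj t u : bp_vertex (Z :\: I) B' t -> bp_vertex (Z :\: I) B' u -> bp_adj t u ->
    GM'_step (f t) (f u).
  case: t => [[A1 A2] A3] /vfacts [b1 b2 eU dU [e3 [c1 c2]]].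
  case: u => [[B1 B2] B3] /vfacts [b1' b2' eU' dU' [e3' [c1' c2']]].
  rewrite /bp_adj e3 e3' setDv cards0 addn0 => /eqP h.
  have cc1 : #|A1| = #|B1| by apply/(@addIn #|I|); rewrite c1 c1'.
  have cc2 : #|A2| = #|B2| by apply/(@addIn #|I|); rewrite c2 c2'.
  have [h1 h2] := adj_cards eU dU eU' dU' cc1 cc2 h.
  have /cards1P [a ea] : #|A1 :\: B1| == 1 by rewrite h1.
  have /cards1P [b eb] : #|A2 :\: B2| == 1 by rewrite h2.
  have [ha hb e1 e2] := adj_sets eU dU eU' dU' ea eb.
  have := @step_sym T k (f (A1, A2, A3)) i j a b nij.
  rewrite /f upd2_i upd2_j //= => /(_ ha hb).
  by rewrite e1 e2 upd2_upd2.
have hpath : forall p t, bp_vertex (Z :\: I) B' t ->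
    path (fun a b => bp_adj a b || bp_adj b a) t p -> all (bp_vertex (Z :\: I) B') p ->
    path (fun a b => GM'_step a b || GM'_step b a) (f t) (map f p) &&
    all (GM'_vertex B S) (map f p).
  elim => [|u p IH] t ht //= /andP[he hp] /andP[hu hall].
  rewrite (hvalid u hu) /=; case/andP: (IH u hu hp hall) => -> ->; rewrite !andbT.
  by case/orP: he => h; apply/orP; [left|right]; apply: hadj.
have hXI : X :\: I \in B'.
  by apply: memB'2; [exact: setSD (subsetUl _ _) | rewrite setDUK' ?subsetIl].
have hYI : Y :\: I \in B'.
  by apply: memB'2; [exact: setSD (subsetUr _ _) | rewrite setDUK' ?subsetIr].
have hdXY : [disjoint X :\: I & Y :\: I].
  rewrite -setI_eq0; apply/eqP/setP => x; rewrite !inE.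
  by case: (x \in X); case: (x \in Y).
pose t0 := (X :\: I, Y :\: I, (Z :\: I) :\: ((X :\: I) :|: (Y :\: I))).
pose t1 := (Y :\: I, X :\: I, (Z :\: I) :\: ((Y :\: I) :|: (X :\: I))).
have ht0 : bp_vertex (Z :\: I) B' t0 by rewrite /= hXI hYI hdXY eqxx.
have ht1 : bp_vertex (Z :\: I) B' t1 by rewrite /= hXI hYI disjoint_sym hdXY eqxx.
have [p [hp hl hall]] := hbp t0 t1 ht0 ht1.
have /andP[hp' hall'] := hpath p t0 ht0 hp hall.
have ft0 : f t0 = A by rewrite /f /= !setDUK' ?subsetIl ?subsetIr // upd2_id.
exists (map f p); split => //; first by rewrite -ft0.
by rewrite -[in LHS]ft0 last_map hl /f /= !setDUK' ?subsetIl ?subsetIr.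
Qed.

End Main.

Theorem theorem2p5 (T : finType) (E : {set T}) (B : {set {set T}})
  (k : nat) (S : T -> nat) :
  is_matroid E B ->
  minors_bp_connected E B ->
  (2 <= k)%N ->
  (forall x, (0 < S x)%N -> x \in E) ->
  \sum_(x : T) S x = (k * rk B E)%N ->
  GM_connected B k S ->
  GM'_connected B k S.
Proof.
move=> HM Hmin _ _ _ hGM A A' hA hA'.
have [p [hp hl hall]] := hGM (cnt A) (cnt A') (cnt_vertex hA) (cnt_vertex hA').
have lift : forall p m (A0 : {ffun 'I_k -> {set T}}),
    path (fun a b => GM_step a b || GM_step b a) m p -> all (GM_vertex B k S) p ->
    cnt A0 = m -> GM'_vertex B S A0 -> exists A2, reach B S A0 A2 /\ cnt A2 = last m p.
  elim => [|m1 q IH] m A0 /=.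
    by move=> _ _ <- _; exists A0; split => //; apply: reach_refl.
  move=> /andP[he hq] /andP[hm1 hall1] hc hA0.
  have [A1 [r1 c1]] : exists A1, reach B S A0 A1 /\ cnt A1 = m1.
    by case/orP: he; rewrite -hc => h; [exact: lift_fwd | exact: lift_bwd].
  have hA1 : GM'_vertex B S A1 by apply: vertex_cnt; rewrite c1.
  have [A2 [r2 c2]] := IH m1 A1 hq hall1 c1 hA1.
  by exists A2; split => //; exact: reach_trans r1 r2.
have [A2 [r2 c2]] := lift p (cnt A) A hp hall erefl hA.
rewrite hl in c2.
have hA2 : GM'_vertex B S A2 by apply: vertex_cnt; rewrite c2; exact: cnt_vertex.
have r3 := perm_reach (swap_reach HM Hmin) (leqnn _) hA2 c2.
exact: reach_trans r2 r3.
Qed.
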